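(* Let $G$ be a finite simple graph without isolated edges and without isolated triangles. Then the edges of $G$ can be colored with $a(G)$ colors so that each color class induces a forest without isolated edges.
   Context: The arboricity $a(G)$ is the least number of forests into which the edge set of $G$ can be decomposed. An isolated edge of a graph is a connected component isomorphic to $K_2$; an isolated triangle is a connected component isomorphic to $K_3$. A forest induced by a color class has no isolated edges if none of its components consists of a single edge. *)

(* Defs.v *)
From mathcomp Require Import all_boot.
Set Implicit Arguments. Unset Strict Implicit. Unset Printing Implicit Defensive.

(* A finite simple graph: vertex type T : finType, adjacency e : rel T,
   symmetric and irreflexive. Edges are 2-element vertex sets. *)

Definition edges (T : finType) (e : rel T) : {set {set T}} :=
  [set [set x; y] | x in T, y in T & e x y].

Definition is_forest (T : finType) (F : {set {set T}}) : Prop :=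
  ~ exists s : seq T,
      [/\ uniq s, 3 <= size s & cycle (fun x y => [set x; y] \in F) s].

Definition isolated_edge_in (T : finType) (F : {set {set T}}) (f : {set T}) :
  Prop := f \in F /\ forall g, g \in F -> g != f -> [disjoint g & f].

Definition no_isolated_edges (T : finType) (F : {set {set T}}) : Prop :=
  forall f, ~ isolated_edge_in F f.

Definition forest_decomposable (T : finType) (e : rel T) (k : nat) : Prop :=
  exists c : {set T} -> 'I_k,
    forall i : 'I_k, is_forest [set f in edges e | c f == i].

Definition is_arboricity (T : finType) (e : rel T) (k : nat) : Prop :=
  forest_decomposable e k /\ forall j, forest_decomposable e j -> k <= j.

Definition has_isolated_edge (T : finType) (e : rel T) : Prop :=
  exists x y, [/\ e x y, (forall v, e x v -> v = y) & (forall v, e y v -> v = x)].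

Definition has_isolated_triangle (T : finType) (e : rel T) : Prop :=
  exists x y z, [/\ e x y, e y z, e x z &
    forall u v, e u v -> u \in [set x; y; z] -> v \in [set x; y; z]].

(* Main.v *)
Require Import Defs.
From mathcomp Require Import all_boot.
From Stdlib Require Import Classical.
Set Implicit Arguments. Unset Strict Implicit. Unset Printing Implicit Defensive.

Section Arb.
Variable T : finType.
Variable e : rel T.
Hypothesis esy : symmetric e.
Hypothesis eirr : irreflexive e.

Lemma set2_eq (x y a b : T) : [set x; y] = [set a; b] ->
  (x = a /\ y = b) \/ (x = b /\ y = a).
Proof.
move=> E.
have hx : x \in [set a; b] by rewrite -E set21.
have hy : y \in [set a; b] by rewrite -E set22.
have ha : a \in [set x; y] by rewrite E set21.
have hb : b \in [set x; y] by rewrite E set22.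
move/set2P: hx => [] hx; move/set2P: hy => [] hy; subst.
- by move/set2P: hb => [] ->; left.
- by left.
- by right.
- by move/set2P: ha => [] ->; right.
Qed.

Lemma edgesP f : f \in edges e -> exists x y, e x y /\ f = [set x; y].
Proof. by case/imset2P => x y _; rewrite inE => exy ->; exists x, y. Qed.

Lemma edge_in x y : e x y -> [set x; y] \in edges e.
Proof. by move=> exy; apply/imset2P; exists x y; rewrite ?inE. Qed.

Lemma in_edges x y : [set x; y] \in edges e -> e x y.
Proof.
case/edgesP=> a [b [eab /set2_eq [[-> ->]|[-> ->]]]] //.
by rewrite esy.
Qed.

Lemma e_neq x y : e x y -> x != y.
Proof. by apply: contraTneq => ->; rewrite eirr. Qed.

Definition adj (F : {set {set T}}) x y := [set x; y] \in F.

Lemma adjC F x y : adj F x y = adj F y x.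
Proof. by rewrite /adj setUC. Qed.

Definition cl k (c : {set T} -> 'I_k) (i : 'I_k) : {set {set T}} :=
  [set f in edges e | c f == i].

Lemma adj_cl k (c : {set T} -> 'I_k) i x y :
  adj (cl c i) x y = (e x y && (c [set x; y] == i)).
Proof.
rewrite /adj /cl inE; case exy: (e x y); first by rewrite edge_in.
by case h: ([set x; y] \in edges e) => //; move: (in_edges h); rewrite exy.
Qed.

Definition isoN (F : {set {set T}}) u v :=
  (forall x, adj F u x -> x = v) /\ (forall x, adj F v x -> x = u).

Definition isoS k (c : {set T} -> 'I_k) : {set {set T}} :=
  [set f in edges e | [forall g in cl c (c f), (g != f) ==> [disjoint g & f]]].

Lemma isoP k (c : {set T} -> 'I_k) p q : e p q ->
  ([set p; q] \in isoS c) <-> isoN (cl c (c [set p; q])) p q.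
Proof.
move=> epq; have npq := e_neq epq.
split.
- rewrite inE => /andP [_ /forall_inP H].
  have key : forall a b x, [set a; b] = [set p; q] -> adj (cl c (c [set p; q])) a x -> x = b.
    move=> a b x E ax; move: (H _ ax); case: eqP => [E2 _|_ /= D].
      by rewrite -E in E2; case/set2_eq: E2 => [[_ ->]|[-> ->]].
    have : a \in [set p; q] by rewrite -E set21.
    by rewrite (disjointFr D) // set21.
  split=> x; first exact: key.
  by apply: key; rewrite setUC.
- case=> H1 H2; rewrite inE edge_in //=; apply/forall_inP => g gin.
  apply/implyP => ng.
  have gE : g \in edges e by move: gin; rewrite inE => /andP [].
  case/edgesP: gE => a [b [eab gab]]; subst g.
  rewrite disjoints_subset; apply/subsetP => z; rewrite !inE.
  have adjab : adj (cl c (c [set p; q])) a b by [].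
  have adjba : adj (cl c (c [set p; q])) b a by rewrite adjC.
  case/orP => /eqP ->; apply/negP => /orP [] /eqP E; subst.
  + by move: ng; rewrite (H1 _ adjab) eqxx.
  + by move: ng; rewrite (H2 _ adjab) setUC eqxx.
  + by move: ng; rewrite (H1 _ adjba) setUC eqxx.
  + by move: ng; rewrite (H2 _ adjba) eqxx.
Qed.


Lemma cycle_two_nbrs (R : rel T) s x : uniq s -> 3 <= size s -> cycle R s ->
  x \in s -> exists y z, [/\ y \in s, z \in s, y != z, R x y & R z x].
Proof.
move=> us ss cs xs.
have := rot_index xs; set s' := _ ++ _ => E.
have us' : uniq (x :: s') by rewrite -E rot_uniq.
have ss' : 3 <= size (x :: s') by rewrite -E size_rot.
have cs' : cycle R (x :: s') by rewrite -E rot_cycle.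
have ms : forall y, y \in x :: s' -> y \in s by move=> y; rewrite -E mem_rot.
case: s' E us' ss' cs' ms => [|y t] // E us' ss' cs' ms.
case: t E us' ss' cs' ms => [|z0 t] // E us' ss' cs' ms.
move: cs' => /=; rewrite -cats1 cat_path => /and3P [Rxy _ /andP [_ /= /andP [Rl _]]]. rewrite -/(last z0 t) in Rl.
exists y, (last z0 t); split => //.
- by apply: ms; rewrite !inE eqxx orbT.
- by apply: ms; rewrite in_cons; apply/orP; right; rewrite in_cons; apply/orP; right; apply: mem_last.
- move: us' => /= /and3P [_ ny _]; apply/eqP => E2.
  by move: ny; rewrite E2 mem_last.
Qed.

Lemma one_nbr_notin F x s : uniq s -> 3 <= size s -> cycle (adj F) s ->
  (forall y z, adj F x y -> adj F x z -> y = z) -> x \notin s.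
Proof.
move=> us ss cs H; apply/negP => xs.
have [y [z [_ _ nyz Rxy Rzx]]] := cycle_two_nbrs us ss cs xs.
by move: nyz; rewrite (H y z Rxy) ?eqxx // adjC.
Qed.

Lemma forest_sub (F F' : {set {set T}}) : F' \subset F -> is_forest F -> is_forest F'.
Proof.
move=> sub fF [s [us ss cs]]; apply: fF; exists s; split => //.
by apply: sub_cycle cs => a b; apply: (subsetP sub).
Qed.

Lemma forest_extend (F F' : {set {set T}}) x : is_forest F ->
  (forall p q, adj F' p q -> p != x -> q != x -> adj F p q) ->
  (forall s, uniq s -> 3 <= size s -> cycle (adj F') s -> x \notin s) ->
  is_forest F'.
Proof.
move=> fF H Hs [s [us ss cs]]; apply: fF; exists s; split => //.
have xs := Hs s us ss cs.
apply: (@sub_in_cycle _ (predC1 x) (adj F')) cs; last first.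
  by apply/allP => y ys; rewrite /= ; apply: contraNneq xs => <-.
by move=> a b /= na nb ab; apply: (H a b ab).
Qed.


Variable k : nat.
Implicit Types c : {set T} -> 'I_k.

Definition valid c := forall i, is_forest (cl c i).
Definition N c := #|isoS c|.
Definition upd c (g : {set T}) (j : 'I_k) : {set T} -> 'I_k :=
  fun f => if f == g then j else c f.

Lemma adj_upd c g j l x y : adj (cl (upd c g j) l) x y =
  e x y && (if [set x; y] == g then j == l else c [set x; y] == l).
Proof. by rewrite adj_cl /upd; case: ([set x; y] == g). Qed.

Lemma cl_upd_sub c g j l : l != j -> cl (upd c g j) l \subset cl c l.
Proof.
move=> nlj; apply/subsetP => f; rewrite !inE /upd => /andP [-> /=].
by case: (f == g) => //= /eqP E; move: nlj; rewrite E eqxx.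
Qed.

Lemma isoS_edges c f : f \in isoS c -> exists p q, e p q /\ f = [set p; q].
Proof. by rewrite inE => /andP [/edgesP]. Qed.

Lemma iso_from c c' p q : e p q -> [set p; q] \in isoS c' ->
  c' [set p; q] = c [set p; q] ->
  (forall a b x, [set a; b] = [set p; q] -> adj (cl c (c [set p; q])) a x ->
     ~~ adj (cl c' (c [set p; q])) a x -> isoN (cl c' (c [set p; q])) p q -> x = b) ->
  [set p; q] \in isoS c.
Proof.
move=> epq /(isoP _ epq) iso' E H; rewrite E in iso'.
apply/(isoP _ epq); case: (iso') => H1 H2; split => x ax.
  by case ax': (adj (cl c' (c [set p; q])) p x); [apply: H1|apply: (H p q) => //; rewrite ax'].
case ax': (adj (cl c' (c [set p; q])) q x); first by apply: H2.
by apply: (H q p) => //; [rewrite setUC|rewrite ax'].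
Qed.

Lemma card_lt (A B : {set {set T}}) x : A \subset B :\ x -> x \in B -> #|A| < #|B|.
Proof.
move=> sub xB; rewrite (cardsD1 x B) xB add1n ltnS.
exact: subset_leq_card.
Qed.

Lemma move1 c u v j : e u v -> isoN (cl c (c [set u; v])) u v ->
  j != c [set u; v] ->
  ((exists x, adj (cl c j) u x) \/ (exists x, adj (cl c j) v x)) ->
  N (upd c [set u; v] j) < N c.
Proof.
move=> euv [Iu Iv] nj Hx.
have uvS : [set u; v] \in isoS c by apply/isoP.
apply: (card_lt _ uvS); apply/subsetP => f fS.
have [p [q [epq fE]]] := isoS_edges fS; subst f.
rewrite in_setD1; case: eqP => [E|nE] /=.
  exfalso; move: fS; rewrite E => /(isoP _ euv) [J1 J2].
  move: J1 J2; rewrite /upd eqxx => J1 J2.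
  have adjE : forall a x, adj (cl c j) a x -> adj (cl (upd c [set u; v] j) j) a x.
    move=> a x; rewrite !adj_upd adj_cl => /andP [-> /eqP cj].
    by case: eqP => _; rewrite ?cj eqxx.
  case: Hx => [[x ux]|[x vx]].
    move: (J1 x (adjE _ _ ux)) => xv; subst x.
    by move: ux; rewrite adj_cl => /andP [_ /eqP cj]; move: nj; rewrite cj eqxx.
  move: (J2 x (adjE _ _ vx)) => xu; subst x.
  by move: vx; rewrite adj_cl setUC => /andP [_ /eqP cj]; move: nj; rewrite cj eqxx.
apply: (iso_from epq fS); first by rewrite /upd; case: eqP.
move=> a b x abE ax; rewrite adj_upd; move: (ax); rewrite adj_cl => /andP [-> /eqP cax] /=.
case: eqP => [axE _ _|_]; last by rewrite cax eqxx.
have fi : adj (cl c (c [set u; v])) a b by rewrite /adj /cl inE abE edge_in //= -axE cax.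
case/set2_eq: axE => [[au _]|[av _]]; subst a.
  by move: (Iu b fi) => bv; subst b; case: nE; rewrite -abE.
by move: (Iv b fi) => bu; subst b; case: nE; rewrite -abE setUC.
Qed.


Definition minimal c := valid c /\ forall c', valid c' -> N c <= N c'.

Lemma adj_keep c g j l x y : adj (cl c l) x y -> [set x; y] != g ->
  adj (cl (upd c g j) l) x y.
Proof. by rewrite adj_upd adj_cl => /andP [-> H] /negbTE ->. Qed.

Lemma adj_keep' c g j l x y : adj (cl (upd c g j) l) x y -> [set x; y] != g ->
  adj (cl c l) x y.
Proof. by rewrite adj_upd adj_cl => /andP [-> H] /negbTE E; rewrite E in H. Qed.

Lemma adj_new c g j x y : e x y -> [set x; y] = g -> adj (cl (upd c g j) j) x y.
Proof. by move=> exy E; rewrite adj_upd exy E !eqxx. Qed.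

Lemma adj_e F c l x y : F = cl c l -> adj F x y -> e x y.
Proof. by move=> ->; rewrite adj_cl => /andP []. Qed.

Lemma adj_col c l x y : adj (cl c l) x y -> c [set x; y] = l.
Proof. by rewrite adj_cl => /andP [_ /eqP]. Qed.

Lemma isoN_set F a b p q : [set a; b] = [set p; q] -> isoN F p q -> isoN F a b.
Proof. by case/set2_eq => [[-> ->]|[-> ->]] // [H1 H2]; split. Qed.

Definition caseA (F : {set {set T}}) (a w : T) := exists z : T, [/\ z != w, adj F a z,
  (forall x, adj F a x -> x = w \/ x = z) & (forall x, adj F z x -> x = a)].
Definition caseB (F : {set {set T}}) (a w : T) := exists z : T, [/\ z != a, adj F w z,
  (forall x, adj F w x -> x = a \/ x = z) & (forall x, adj F z x -> x = w)].

Lemma set2_neq_l (a b x y : T) : [set a; b] = [set x; y] -> a != x -> a != y -> False.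
Proof. by case/set2_eq => [[-> _]|[-> _]]; rewrite eqxx. Qed.

Lemma move2 c a b w j : minimal c -> e a b ->
  isoN (cl c (c [set a; b])) a b -> adj (cl c j) a w -> j != c [set a; b] ->
  caseA (cl c j) a w \/ caseB (cl c j) a w.
Proof.
move=> [vc minc] eab [Iu Iv] aw nji.
set i := c [set a; b] in Iu Iv nji.
have eaw : e a w := adj_e (erefl _) aw.
have naw : a != w := e_neq eaw.
have nab : a != b := e_neq eab.
have nwb : w != b.
  by apply: contraNneq nji => E; subst w; rewrite -(adj_col aw).
set c2 := upd c [set a; w] i.
have nab_aw : [set a; b] != [set a; w].
  by apply/eqP => /set2_eq [[_ E]|[E _]]; [move: nwb; rewrite E eqxx|move: naw; rewrite E eqxx].
have Nb : forall y, adj (cl c2 i) b y -> y = a.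
  move=> y H; apply: Iv; apply: (adj_keep' H); apply/eqP => E.
  by apply: (set2_neq_l E); rewrite eq_sym // eq_sym.
have Na : forall y, adj (cl c2 i) a y -> y = w \/ y = b.
  move=> y H; case: (eqVneq [set a; y] [set a; w]) => [/set2_eq [[_ ->]|[E _]]|ne].
  - by left.
  - by move: naw; rewrite E eqxx.
  - by right; apply: Iu; apply: (adj_keep' H).
have vc2 : valid c2.
  move=> l; case: (eqVneq l i) => [->|nli]; last first.
    by apply: (forest_sub (cl_upd_sub _ _ nli)); apply: vc.
  apply: (forest_extend (x := a) (vc i)).
    move=> p q H np nq; apply: (adj_keep' H); apply/eqP => E.
    by apply: (set2_neq_l (esym E)); rewrite eq_sym.
  move=> s us ss cs; apply/negP => ais.
  have bns : b \notin s.
    apply: (one_nbr_notin us ss cs) => y z /Nb -> /Nb ->; done.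
  have [y [z [ys zs nyz ay za]]] := cycle_two_nbrs us ss cs ais.
  rewrite adjC in za.
  case: (Na _ ay) => ey; subst y; case: (Na _ za) => ez; subst z.
  + by move: nyz; rewrite eqxx.
  + by move: bns; rewrite zs.
  + by move: bns; rewrite ys.
  + by move: bns; rewrite ys.
case: (classic (caseA (cl c j) a w)) => [hA|nA]; first by left.
case: (classic (caseB (cl c j) a w)) => [hB|nB]; first by right.
exfalso.
have abS : [set a; b] \in isoS c by apply/isoP.
have : N c2 < N c.
  apply: (card_lt _ abS); apply/subsetP => f fS.
  have [p [q [epq fE]]] := isoS_edges fS; subst f.
  rewrite in_setD1; case: eqP => [E|nE] /=.
    move: fS; rewrite E => /(isoP _ eab) [J1 _].
    have c2ab : c2 [set a; b] = i by rewrite /c2 /upd (negbTE nab_aw).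
    rewrite c2ab in J1.
    by move: nwb; rewrite (J1 w (adj_new _ _ eaw (erefl _))) eqxx.
  case: (eqVneq [set p; q] [set a; w]) => [E|nE2].
    move: fS; rewrite E => /(isoP _ eaw) [J1 _].
    have c2aw : c2 [set a; w] = i by rewrite /c2 /upd eqxx.
    rewrite c2aw in J1.
    have : adj (cl c2 i) a b by apply: adj_keep => //; rewrite /adj /cl inE edge_in //= eqxx.
    by move/J1 => E2; move: nwb; rewrite E2 eqxx.
  apply: (iso_from epq fS); first by rewrite /c2 /upd (negbTE nE2).
  move=> a' b' x abE ax nax isoc2.
  have Ec : [set a'; x] = [set a; w].
    by apply/eqP; apply: contraNT nax => ne; apply: adj_keep.
  have ea'b' : e a' b' by apply: in_edges; rewrite abE edge_in.
  have fj : c [set p; q] = j by rewrite -(adj_col ax) Ec (adj_col aw).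
  have [I1 I2] := isoN_set abE isoc2.
  rewrite fj in I1 I2 ax.
  have fcl : adj (cl c j) a' b' by rewrite adj_cl ea'b' abE fj eqxx.
  case/set2_eq: Ec => [[ea ex]|[ea ex]]; subst a' x.
  - exfalso; apply: nA; exists b'; split => //.
    + by apply/eqP => E; subst b'; case/eqP: nE2; rewrite -abE.
    + move=> y ay; case: (eqVneq [set a; y] [set a; w]) => [/set2_eq [[_ ->]|[E _]]|ne].
      * by left.
      * by move: naw; rewrite E eqxx.
      * by right; apply: I1; apply: adj_keep.
    + move=> y by'; apply: I2; apply: adj_keep => //; apply/eqP => E.
      apply: (set2_neq_l E); first by rewrite eq_sym e_neq.
      by apply/eqP => E2; subst b'; case/eqP: nE2; rewrite -abE.
  - exfalso; apply: nB; exists b'; split => //.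
    + by apply/eqP => E; subst b'; case/eqP: nE2; rewrite -abE setUC.
    + move=> y ay; case: (eqVneq [set w; y] [set a; w]) => [/set2_eq [[E _]|[_ ->]]|ne].
      * by move: naw; rewrite E eqxx.
      * by left.
      * by right; apply: I1; apply: adj_keep.
    + move=> y by'; apply: I2; apply: adj_keep => //; apply/eqP => E.
      apply: (set2_neq_l E); last by rewrite eq_sym e_neq.
      by apply/eqP => E2; subst b'; case/eqP: nE2; rewrite -abE setUC.
by rewrite ltnNge minc.
Qed.


Lemma step c a b w p2 j : minimal c -> e a b ->
  isoN (cl c (c [set a; b])) a b -> j != c [set a; b] ->
  adj (cl c j) a w -> adj (cl c j) w p2 -> p2 != a ->
  (p2 = b \/ exists p3, p3 != w /\ adj (cl c j) p2 p3) ->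
  [/\ p2 = b, (forall x, adj (cl c j) b x -> x = w) &
      (forall x, adj (cl c j) w x -> x = a \/ x = b)].
Proof.
move=> mc eab iso nji aw wp2 np2a H.
case: (move2 mc eab iso aw nji) => [[z [nzw az Na Nz]]|[z [nza wz Nw Nz]]].
  exfalso.
  case: (move2 mc eab iso az nji) => [[z' [nz'z az' Na' Nz']]|[y [nya zy _ _]]].
    case: (Na _ az') => E; last by move: nz'z; rewrite E eqxx.
    subst z'; move: np2a; by rewrite (Nz' _ wp2) eqxx.
  by move: nya; rewrite (Nz _ zy) eqxx.
case: (Nw _ wp2) => E; first by move: np2a; rewrite E eqxx.
subst z.
have p2b : p2 = b.
  case: H => // [[p3 [np3w p2p3]]].
  by move: np3w; rewrite (Nz _ p2p3) eqxx.
subst p2; split => // x wx; case: (Nw _ wx) => ->; by [left|right].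
Qed.


Lemma set2_neq_both (a b x y : T) : [set x; y] = [set a; b] -> x != a -> y != a -> False.
Proof. by case/set2_eq => [[-> _]|[_ ->]]; rewrite eqxx // orbT. Qed.

Lemma lcyc (F F' : {set {set T}}) a b t :
  (forall x y, adj F' x y -> [set x; y] != [set a; b] -> adj F x y) ->
  cycle (adj F') (a :: t) -> uniq (a :: t) -> 2 <= size t -> last a t = b ->
  exists w p2, [/\ adj F a w, adj F w p2, p2 != a &
     (p2 = b \/ exists p3, p3 != w /\ adj F p2 p3)].
Proof.
move=> Hs; case: t => [|w [|p2 t2]] // cyc un _ lst.
move: cyc => /= /and3P [aw wp2 pth].
move: un => /= /andP [na /andP [nw /andP [np2 _]]].
have nwa : w != a by apply: contraNneq na => ->; rewrite inE eqxx.
have nwb : w != b.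
  apply: contraNneq nw => ->; rewrite -lst /=.
  by have := mem_last p2 t2.
have np2a : p2 != a by apply: contraNneq na => ->; rewrite !inE eqxx orbT.
exists w, p2; split => //.
- apply: Hs => //; apply/eqP => /set2_eq [[_ E]|[_ E]].
    by move: nwb; rewrite E eqxx.
  by move: nwa; rewrite E eqxx.
- apply: Hs => //; apply/eqP => E; exact: (set2_neq_both E nwa np2a).
- move: lst pth np2 na nw; case: t2 => [|p3 t3] /= lst pth np2 na nw; first by left.
  right; exists p3; split.
    by apply: contraNneq nw => ->; rewrite !inE eqxx !orbT.
  move: pth => /andP [p2p3 _]; apply: Hs => //; apply/eqP => E.
  apply: (set2_neq_both E np2a); apply: contraNneq na => ->.
  by rewrite !inE eqxx !orbT.
Qed.


Lemma cherry_ab c a b j w p2 : minimal c -> e a b ->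
  isoN (cl c (c [set a; b])) a b -> j != c [set a; b] ->
  adj (cl c j) a w -> adj (cl c j) w p2 -> p2 != a ->
  (p2 = b \/ exists p3, p3 != w /\ adj (cl c j) p2 p3) ->
  [/\ adj (cl c j) a w, adj (cl c j) b w, (forall x, adj (cl c j) a x -> x = w),
      (forall x, adj (cl c j) b x -> x = w) &
      (forall x, adj (cl c j) w x -> x = a \/ x = b)].
Proof.
move=> mc eab iso nji aw wp2 np2a H.
have [p2b Nb Nw] := step mc eab iso nji aw wp2 np2a H; subst p2.
have eba : e b a by rewrite esy.
have iso' : isoN (cl c (c [set b; a])) b a.
  by rewrite setUC; case: iso => I1 I2; split.
have nji' : j != c [set b; a] by rewrite setUC.
have bw : adj (cl c j) b w by rewrite adjC.
have wa : adj (cl c j) w a by rewrite adjC.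
have [_ Na _] := step mc eba iso' nji' bw wa (e_neq eab) (or_introl erefl).
by split => //; rewrite adjC.
Qed.


Lemma isoN_swap F (a b : T) : isoN F a b -> isoN F b a.
Proof. by case=> H1 H2; split. Qed.

Lemma cherry c u v j : minimal c -> e u v ->
  isoN (cl c (c [set u; v])) u v -> j != c [set u; v] ->
  ((exists x, adj (cl c j) u x) \/ (exists x, adj (cl c j) v x)) ->
  exists w, [/\ adj (cl c j) u w, adj (cl c j) v w, (forall x, adj (cl c j) u x -> x = w),
      (forall x, adj (cl c j) v x -> x = w) &
      (forall x, adj (cl c j) w x -> x = u \/ x = v)].
Proof.
move=> mc euv iso nji H.
have [vc minc] := mc.
set c1 := upd c [set u; v] j.
have nv1 : ~ valid c1.
  by move=> v1; have := move1 euv iso nji H; rewrite ltnNge minc.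
have [s [us ss cs]] : exists s, [/\ uniq s, 3 <= size s & cycle (adj (cl c1 j)) s].
  apply: NNPP => nex; apply: nv1 => l; case: (eqVneq l j) => [->|nlj]; first exact: nex.
  by apply: (forest_sub (cl_upd_sub _ _ nlj)); apply: vc.
have Hsub : forall x y, adj (cl c1 j) x y -> [set x; y] != [set u; v] -> adj (cl c j) x y.
  by move=> x y; apply: adj_keep'.
have nuv : u != v := e_neq euv.
have memv : v \in s.
  apply: contraT => nvs; exfalso; apply: (vc j); exists s; split => //.
  apply: (@sub_in_cycle _ (predC1 v) (adj (cl c1 j))) cs; last first.
    by apply/allP => y ys; rewrite /=; apply: contraNneq nvs => <-.
  move=> x y /= nx ny xy; apply: Hsub => //; apply/eqP => E.
  by rewrite setUC [[set u; v]]setUC in E; apply: (set2_neq_both E).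
have memu : u \in s.
  apply: contraT => nus; exfalso; apply: (vc j); exists s; split => //.
  apply: (@sub_in_cycle _ (predC1 u) (adj (cl c1 j))) cs; last first.
    by apply/allP => y ys; rewrite /=; apply: contraNneq nus => <-.
  move=> x y /= nx ny xy; apply: Hsub => //; apply/eqP => E.
  by apply: (set2_neq_both E).
have := rot_index memu; set t := _ ++ _ => E.
have un' : uniq (u :: t) by rewrite -E rot_uniq.
have ss' : 3 <= size (u :: t) by rewrite -E size_rot.
have cs' : cycle (adj (cl c1 j)) (u :: t) by rewrite -E rot_cycle.
have vt : v \in t.
  by move: memv; rewrite -(mem_rot (index u s)) E inE eq_sym (negbTE nuv).
clearbody t; clear E.
case: (eqVneq (last u t) v) => [lst|nlst].
  have [w [p2 [aw wp2 np2 Hp]]] := lcyc Hsub cs' un' ss' lst.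
  have [? ? ? ? ?] := cherry_ab mc euv iso nji aw wp2 np2 Hp.
  by exists w.
case: t un' ss' cs' vt nlst => [|y t1] // un' ss' cs' vt nlst.
case: (eqVneq y v) => [yv|nyv].
  subst y.
  have cs2 : cycle (adj (cl c1 j)) (v :: rcons t1 u).
    by rewrite -rcons_cons -rot1_cons rot_cycle.
  have un2 : uniq (v :: rcons t1 u) by rewrite -rcons_cons -rot1_cons rot_uniq.
  have ss2 : 2 <= size (rcons t1 u) by move: ss'; rewrite size_rcons.
  have lst2 : last v (rcons t1 u) = u by rewrite last_rcons.
  have Hsub2 : forall x y, adj (cl c1 j) x y -> [set x; y] != [set v; u] -> adj (cl c j) x y.
    by move=> x y xy; rewrite [[set v; u]]setUC; apply: Hsub.
  have [w [p2 [aw wp2 np2 Hp]]] := lcyc Hsub2 cs2 un2 ss2 lst2.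
  have evu : e v u by rewrite esy.
  have iso2 : isoN (cl c (c [set v; u])) v u by rewrite setUC; apply: isoN_swap.
  have nji2 : j != c [set v; u] by rewrite setUC.
  have [h1 h2 h3 h4 h5] := cherry_ab mc evu iso2 nji2 aw wp2 np2 Hp.
  exists w; split => // x /h5 [] ->; by [right|left].
exfalso; apply: (vc j); exists (u :: y :: t1); split => //.
move: cs' => /=; rewrite rcons_path => /andP [uy /andP [pth lu]].
have uy' : adj (cl c j) u y.
  apply: Hsub uy _; apply/eqP => /set2_eq [[_ E]|[E _]].
    by move: nyv; rewrite E eqxx.
  by move: nuv; rewrite E eqxx.
have lu' : adj (cl c j) (last y t1) u.
  apply: Hsub lu _; apply/eqP => /set2_eq [[_ E]|[E _]].
    by move: nuv; rewrite E eqxx.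
  by move: nlst; rewrite /= E eqxx.
have nut : u \notin y :: t1 by move: un' => /= /andP [].
have pth' : path (adj (cl c j)) y t1.
  apply: (@sub_in_path _ (predC1 u) (adj (cl c1 j))) pth; last first.
    by apply/allP => z zs; rewrite /=; apply: contraNneq nut => <-.
  move=> x z /= nx nz xz; apply: Hsub => //; apply/eqP => E.
  by apply: (set2_neq_both E).
by rewrite /= rcons_path; apply/and3P; split.
Qed.


Definition swapc c u v w (j i : 'I_k) := upd (upd c [set u; v] j) [set u; w] i.

Lemma adj_swap c u v w j i l x y : adj (cl (swapc c u v w j i) l) x y =
  e x y && (if [set x; y] == [set u; w] then i == l else
            if [set x; y] == [set u; v] then j == l else c [set x; y] == l).
Proof.
rewrite adj_cl /swapc /upd.
by case: ([set x; y] == [set u; w]); case: ([set x; y] == [set u; v]).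
Qed.

Lemma swap c u v w j : valid c -> e u v ->
  isoN (cl c (c [set u; v])) u v -> j != c [set u; v] ->
  adj (cl c j) u w -> adj (cl c j) v w -> (forall x, adj (cl c j) u x -> x = w) ->
  (forall x, adj (cl c j) w x -> x = u \/ x = v) ->
  let i := c [set u; v] in let c' := swapc c u v w j i in
  [/\ valid c', isoS c' :\ [set u; w] \subset isoS c :\ [set u; v],
      c' [set u; w] = i,
      (forall l x y, l != i -> l != j -> adj (cl c' l) x y = adj (cl c l) x y) &
      ([set u; w] \in isoS c' <-> forall y, ~ adj (cl c i) w y)].
Proof.
move=> vc euv [Iu Iv] nji uw vw Nu Nw i c'.
have euw : e u w := adj_e (erefl _) uw.
have evw : e v w := adj_e (erefl _) vw.
have nuv := e_neq euv; have nuw := e_neq euw; have nvw := e_neq evw.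
have nuvw : [set u; v] != [set u; w].
  by apply/eqP => /set2_eq [[_ E]|[E _]]; [move: nvw|move: nuw]; rewrite E eqxx.
have c'uw : c' [set u; w] = i by rewrite /c' /swapc /upd eqxx.
have c'uv : c' [set u; v] = j by rewrite /c' /swapc /upd (negbTE nuvw) eqxx.
have c'o : forall f, f != [set u; w] -> f != [set u; v] -> c' f = c f.
  by move=> f n1 n2; rewrite /c' /swapc /upd (negbTE n1) (negbTE n2).
have same : forall l x y, [set x; y] != [set u; w] -> [set x; y] != [set u; v] ->
    adj (cl c' l) x y = adj (cl c l) x y.
  by move=> l x y n1 n2; rewrite adj_swap adj_cl (negbTE n1) (negbTE n2).
have avoid : forall x y, x != u -> y != u -> [set x; y] != [set u; w] /\ [set x; y] != [set u; v].
  by move=> x y nx ny; split; apply/eqP => E; apply: (set2_neq_both E).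
have Nui : forall x, adj (cl c' i) u x -> x = w.
  move=> x; rewrite adj_swap; case: eqP => [/set2_eq [[_ ->]|[E _]] //|n1].
    by move: nuw; rewrite E eqxx.
  case: eqP => [_|n2]; first by rewrite (negbTE nji) andbF.
  move=> /andP [eux /eqP cx]; have : adj (cl c i) u x by rewrite adj_cl eux cx eqxx.
  by move/Iu => E; subst x.
have Nuj : forall x, adj (cl c' j) u x -> x = v.
  move=> x; rewrite adj_swap; case: eqP => [_|n1]; first by rewrite eq_sym (negbTE nji) andbF.
  case: eqP => [/set2_eq [[_ ->]|[E _]] //|n2]; first by move: nuv; rewrite E eqxx.
  move=> /andP [eux /eqP cx]; have : adj (cl c j) u x by rewrite adj_cl eux cx eqxx.
  by move/Nu => E; subst x.
have vc' : valid c'.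
  move=> l; case: (eqVneq l i) => [->|nli].
    apply: (forest_extend (x := u) (vc i)).
      move=> p q pq np nq; have [n1 n2] := avoid p q np nq; by rewrite -(same i p q).
    move=> s us ss cs; apply: (one_nbr_notin us ss cs) => y z /Nui -> /Nui ->; done.
  case: (eqVneq l j) => [->|nlj].
    apply: (forest_extend (x := u) (vc j)).
      move=> p q pq np nq; have [n1 n2] := avoid p q np nq; by rewrite -(same j p q).
    move=> s us ss cs; apply: (one_nbr_notin us ss cs) => y z /Nuj -> /Nuj ->; done.
  apply: (forest_sub _ (vc l)).
  apply: subset_trans (cl_upd_sub _ _ nli) (cl_upd_sub _ _ nlj).
split => //.
- apply/subsetP => f; rewrite in_setD1 => /andP [nfuw fS].
  have [p [q [epq fE]]] := isoS_edges fS; subst f.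
  rewrite in_setD1; case: eqP => [E|nE] /=.
    exfalso; move: fS; rewrite E => /(isoP _ euv) [_ J2].
    rewrite c'uv in J2.
    have : adj (cl c' j) v w.
      have [n1 n2] : [set v; w] != [set u; w] /\ [set v; w] != [set u; v].
        split; apply/eqP => E2.
          by apply: (set2_neq_both E2) => //; rewrite eq_sym.
        by case/set2_eq: E2 => [[E3 _]|[_ E3]]; [move: nuv|move: nuw]; rewrite E3 eqxx.
      by rewrite same.
    by move/J2 => E2; move: nuw; rewrite E2 eqxx.
  apply: (iso_from epq fS); first by apply: c'o => //; apply/eqP.
  move=> a b x abE ax nax isoc'.
  have [I1 I2] := isoN_set abE isoc'.
  have fab : [set a; b] != [set u; v] by rewrite abE; apply/eqP.
  have fab2 : [set a; b] != [set u; w] by rewrite abE.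
  have eab : e a b by apply: in_edges; rewrite abE edge_in.
  have fcl : adj (cl c (c [set p; q])) a b by rewrite adj_cl eab abE eqxx.
  case: (eqVneq [set a; x] [set u; w]) => [Ew|n1]; last first.
    case: (eqVneq [set a; x] [set u; v]) => [Ev|n2]; last by move: nax; rewrite same // ax.
    have ci : c [set p; q] = i by rewrite -(adj_col ax) Ev.
    rewrite ci in fcl.
    case/set2_eq: Ev => [[ea _]|[ea _]]; subst a.
      by move: fab; rewrite (Iu _ fcl) eqxx.
    by move: fab; rewrite (Iv _ fcl) setUC eqxx.
  have cj : c [set p; q] = j by rewrite -(adj_col ax) Ew (adj_col uw).
  rewrite cj in fcl I1 I2.
  case/set2_eq: Ew => [[ea _]|[ea _]]; subst a.
    by move: fab2; rewrite (Nu _ fcl) eqxx.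
  case: (Nw _ fcl) => eb; subst b; first by move: fab2; rewrite setUC eqxx.
  exfalso.
  have : adj (cl c' j) v u by rewrite adjC /adj /cl inE edge_in //= c'uv eqxx.
  by move/I2 => E; move: nuw; rewrite E eqxx.
- move=> l x y nli nlj; rewrite adj_swap adj_cl.
  case: eqP => [->|_].
    by rewrite (adj_col uw) [i == l]eq_sym (negbTE nli) [j == l]eq_sym (negbTE nlj) !andbF.
  case: eqP => [->|_] //.
  by rewrite [j == l]eq_sym (negbTE nlj) [c _ == l]eq_sym (negbTE nli) !andbF.
- split.
    move/(isoP _ euw); rewrite c'uw => [[_ J2]] y wy.
    have nyu : y != u.
      apply/eqP => E; subst y; rewrite adjC in wy.
      by move: nvw; rewrite (Iu _ wy) eqxx.
    have [n1 n2] : [set w; y] != [set u; w] /\ [set w; y] != [set u; v].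
      split; apply/eqP => E2.
        by case/set2_eq: E2 => [[E3 _]|[_ E3]]; [move: nuw; rewrite E3 eqxx|move: nyu; rewrite E3 eqxx].
      by apply: (set2_neq_both E2) => //; rewrite eq_sym.
    have : adj (cl c' i) w y by rewrite same.
    by move/J2 => E; move: nyu; rewrite E eqxx.
  move=> H; apply/(isoP _ euw); rewrite c'uw; split => // x.
  rewrite adj_swap; case: eqP => [/set2_eq [[E _]|[_ ->]] //|n1].
    by move: nuw; rewrite E eqxx.
  case: eqP => [/set2_eq [[E _]|[E _]]|n2].
  + by move: nuw; rewrite E eqxx.
  + by move: nvw; rewrite E eqxx.
  + move=> /andP [ewx /eqP cx]; exfalso; apply: (H x).
    by rewrite adj_cl ewx cx eqxx.
Qed.


Lemma card_swap_le (A B : {set {set T}}) x y :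
  A :\ x \subset B :\ y -> y \in B -> #|A| <= #|B|.
Proof.
move=> sub yB; rewrite (cardsD1 x A) (cardsD1 y B) yB.
apply: leq_add; first by case: (x \in A).
exact: subset_leq_card.
Qed.

Lemma cherry_full c u v j : minimal c -> e u v ->
  isoN (cl c (c [set u; v])) u v -> j != c [set u; v] ->
  ((exists x, adj (cl c j) u x) \/ (exists x, adj (cl c j) v x)) ->
  exists w, [/\ adj (cl c j) u w, adj (cl c j) v w, (forall x, adj (cl c j) u x -> x = w),
      (forall x, adj (cl c j) v x -> x = w) &
      (forall x, adj (cl c j) w x -> x = u \/ x = v)] /\
      (forall y, ~ adj (cl c (c [set u; v])) w y).
Proof.
move=> mc euv iso nji H.
have [w [uw vw Nu Nv Nw]] := cherry mc euv iso nji H.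
exists w; split; first by []. move=> y wy.
have [vc minc] := mc.
have [vc' sub _ _ [iff1 _]] := swap vc euv iso nji uw vw Nu Nw.
set c' := swapc _ _ _ _ _ _ in vc' sub iff1.
have nin : [set u; w] \notin isoS c' by apply/negP => /iff1 /(_ y).
have uvS : [set u; v] \in isoS c by apply/isoP.
have : N c' < N c.
  apply: (card_lt _ uvS); apply: subset_trans sub.
  by apply/subsetP => f fS; rewrite in_setD1 fS andbT; apply: contraNneq nin => <-.
by rewrite ltnNge minc.
Qed.

Lemma main_aux c u v t : minimal c -> e u v ->
  isoN (cl c (c [set u; v])) u v -> e u t -> t != v ->
  ~ has_isolated_triangle e -> False.
Proof.
move=> mc euv iso eut ntv hit.
have [vc minc] := mc.
set i := c [set u; v] in iso.
set j := c [set u; t].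
have ut : adj (cl c j) u t by rewrite adj_cl eut eqxx.
have nji : j != i.
  apply/eqP => E; rewrite E in ut; case: iso => Iu _.
  by move: ntv; rewrite (Iu _ ut) eqxx.
have [w [[uw vw Nu Nv Nw] Nwi]] := cherry_full mc euv iso nji (or_introl (ex_intro _ t ut)).
have [vc' sub c'uw same [_ iff2]] := swap vc euv iso nji uw vw Nu Nw.
set c' := swapc _ _ _ _ _ _ in vc' sub c'uw same iff2.
have euw : e u w := adj_e (erefl _) uw.
have evw : e v w := adj_e (erefl _) vw.
have nuv := e_neq euv; have nuw := e_neq euw; have nvw := e_neq evw.
have uwS : [set u; w] \in isoS c' by apply: iff2.
have uvS : [set u; v] \in isoS c by apply/isoP.
have mc' : minimal c'.
  split => // c'' vc''; apply: leq_trans (minc _ vc'').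
  exact: card_swap_le sub uvS.
have iso' : isoN (cl c' (c' [set u; w])) u w by apply/isoP.
have nocand : forall l, l != i -> l != j -> (exists x, adj (cl c l) u x) -> False.
  move=> l nli nlj hu.
  have [w1 [uw1 vw1 Nu1 Nv1 Nw1]] := cherry mc euv iso (nli : l != c [set u; v]) (or_introl hu).
  have nli' : l != c' [set u; w] by rewrite c'uw.
  have uw1' : adj (cl c' l) u w1 by rewrite same.
  have [w2 [uw2 ww2 _ _ _]] := cherry mc' euw iso' nli' (or_introl (ex_intro _ w1 uw1')).
  rewrite same // in uw2; rewrite same // in ww2.
  rewrite (Nu1 _ uw2) adjC in ww2.
  by case: (Nw1 _ ww2) => E; [move: nuw|move: nvw]; rewrite E eqxx.
apply: hit; exists u, v, w; split => //.
move=> a b eab; rewrite !inE => Ha; apply: contraT; rewrite !negb_or => /andP [/andP [nbu nbv] nbw].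
set l := c [set a; b].
have ab : adj (cl c l) a b by rewrite adj_cl eab eqxx.
have aw3 : a = u \/ a = v \/ a = w by case/orP: Ha => [/orP [] | ] /eqP; auto.
case: iso => Iu Iv.
have nli : l != i.
  apply/eqP => E; rewrite E in ab; case: aw3 => [ea|[ea|ea]]; subst a.
  - by move: nbv; rewrite (Iu _ ab) eqxx.
  - by move: nbu; rewrite (Iv _ ab) eqxx.
  - exact: Nwi ab.
have nlj : l != j.
  apply/eqP => E; rewrite E in ab; case: aw3 => [ea|[ea|ea]]; subst a.
  - by move: nbw; rewrite (Nu _ ab) eqxx.
  - by move: nbw; rewrite (Nv _ ab) eqxx.
  - by case: (Nw _ ab) => E2; [move: nbu|move: nbv]; rewrite E2 eqxx.
exfalso; apply: (nocand l nli nlj).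
case: aw3 => [ea|[ea|ea]]; subst a.
- by exists b.
- have [w1 [uw1 _ _ _ _]] := cherry mc euv (conj Iu Iv) (nli : l != c [set u; v]) (or_intror (ex_intro _ b ab)).
  by exists w1.
- have nli' : l != c' [set u; w] by rewrite c'uw.
  have ab' : adj (cl c' l) w b by rewrite same.
  have [w2 [uw2 _ _ _ _]] := cherry mc' euw iso' nli' (or_intror (ex_intro _ b ab')).
  by exists w2; rewrite -same.
Qed.


Lemma exists_minimal c0 : valid c0 -> exists c, minimal c.
Proof.
move: {2}(N c0) (leqnn (N c0)) => n; elim: n c0 => [|n IH] c0 Hn vc0.
  exists c0; split => // c' _; by move: Hn; rewrite leqn0 => /eqP ->.
case: (classic (forall c', valid c' -> N c0 <= N c')) => [H|H]; first by exists c0.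
have [c' Hc'] := not_all_ex_not _ _ H.
have [vc' lt] : valid c' /\ N c' < N c0.
  split; first by apply: NNPP => nv; apply: Hc' => /nv.
  by rewrite ltnNge; apply/negP => le; apply: Hc' => _.
by apply: (IH c') => //; rewrite -ltnS; apply: leq_trans lt Hn.
Qed.

Lemma minimal_noiso c : ~ has_isolated_edge e -> ~ has_isolated_triangle e ->
  minimal c -> forall f, f \notin isoS c.
Proof.
move=> hie hit mc f; apply/negP => fS.
have [p [q [epq fE]]] := isoS_edges fS; subst f.
have [I1 I2] := (isoP _ epq).1 fS.
have [t [[ept ntq]|[eqt ntp]]] :
    exists t, (e p t /\ t != q) \/ (e q t /\ t != p).
  apply: NNPP => H; apply: hie; exists p, q; split => // x ex; apply: NNPP => nx.
    by apply: H; exists x; left; split => //; apply/eqP.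
  by apply: H; exists x; right; split => //; apply/eqP.
  exact: (main_aux mc epq (conj I1 I2) ept ntq hit).
have eqp : e q p by rewrite esy.
have iso' : isoN (cl c (c [set q; p])) q p by rewrite setUC; split.
exact: (main_aux mc eqp iso' eqt ntp hit).
Qed.

End Arb.

Theorem lemma1 (T : finType) (e : rel T) (k : nat) :
  symmetric e -> irreflexive e ->
  ~ has_isolated_edge e -> ~ has_isolated_triangle e ->
  is_arboricity e k ->
  exists c : {set T} -> 'I_k,
    forall i : 'I_k,
      is_forest [set f in edges e | c f == i] /\
      no_isolated_edges [set f in edges e | c f == i].
Proof.
move=> esy eirr hie hit [[c0 vc0] _].
have [c [vc minc]] := exists_minimal (e := e) vc0.
exists c => i; split; first exact: vc.
move=> f [fF Hf].
have := minimal_noiso esy eirr hie hit (conj vc minc) f.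
move: fF; rewrite inE => /andP [fE /eqP cf].
rewrite inE fE /=; apply/negP; apply/negPn; apply/forall_inP => g gF.
apply/implyP => ng; apply: Hf => //; by rewrite -cf.
Qed.
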